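(* Let $R$ be the binary code $RM(1,5)$ with generator matrix whose rows are $1^{32}$, $1^{16}0^{16}$, $(1^80^8)^2$, $(1^40^4)^4$, $(1^20^2)^8$, $(10)^{16}$ (coordinates numbered $1,\ldots,32$), and let $v\in\mathbb{F}_2^{32}$ have support $\{1,2,3,4,5,9,17,29\}$. Then $N_{32}=\langle R,v\rangle$ is a binary $[32,7]$ code that is doubly even, contains the all-ones vector, and whose dual has minimum weight at least $4$, but no Type~II $\mathbb{Z}_4$-code $C$ with $C^{(1)}=N_{32}$ is extremal.
   Context: A $\mathbb{Z}_4$-code of length $n$ is a $\mathbb{Z}_4$-submodule of $\mathbb{Z}_4^n$; it is self-dual if it equals its dual with respect to $x\cdot y=\sum x_iy_i \pmod 4$. The Euclidean weight of $x$ is $n_1(x)+4n_2(x)+n_3(x)$, $n_\alpha(x)$ being the number of coordinates equal to $\alpha$. A Type~II $\mathbb{Z}_4$-code is a self-dual code all of whose codewords have Euclidean weight divisible by $8$; it is extremal if its minimum Euclidean weight equals $8\lfloor n/24\rfloor+8$ (so $16$ for $n=32$). The residue code is $C^{(1)}=\{c\bmod 2: c\in C\}$. $\langle B,v\rangle$ denotes the binary code generated by $B$ and $v$. A binary code is doubly even if all codeword weights are divisible by $4$. *)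

(* Defs.v *)
From HB Require Import structures.
From mathcomp Require Import all_boot all_order all_algebra.
Set Implicit Arguments. Unset Strict Implicit. Unset Printing Implicit Defensive.
Import GRing.Theory.
Local Open Scope ring_scope.

(* Coordinates 1..n of the paper are the indices 0..n-1 here. *)

Definition is_Z4code (n : nat) (C : {set 'rV['Z_4]_n}) : Prop :=
  [/\ 0 \in C,
      (forall x y, x \in C -> y \in C -> x + y \in C) &
      (forall (a : 'Z_4) x, x \in C -> a *: x \in C)].

Definition dotZ4 (n : nat) (x y : 'rV['Z_4]_n) : 'Z_4 := (x *m y^T) 0 0.

Definition self_dual (n : nat) (C : {set 'rV['Z_4]_n}) : Prop :=
  C = [set y | [forall x in C, dotZ4 x y == 0]].

Definition ewZ4 (a : 'Z_4) : nat :=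
  if val a == 2%N then 4%N else (val a != 0%N : nat).

Definition eucl_wt (n : nat) (x : 'rV['Z_4]_n) : nat := (\sum_(i < n) ewZ4 (x ord0 i))%N.

Definition typeII (n : nat) (C : {set 'rV['Z_4]_n}) : Prop :=
  [/\ is_Z4code C, self_dual C & forall c, c \in C -> (8 %| eucl_wt c)%N].

Definition extremal (n : nat) (C : {set 'rV['Z_4]_n}) : Prop :=
  (forall c, c \in C -> c != 0 -> (8 * (n %/ 24) + 8 <= eucl_wt c)%N) /\
  (exists2 c, c \in C & (c != 0) && (eucl_wt c == 8 * (n %/ 24) + 8)%N).

Definition red2 (a : 'Z_4) : 'F_2 := (val a)%:R.

Definition residue (n : nat) (C : {set 'rV['Z_4]_n}) : {set 'rV['F_2]_n} :=
  [set map_mx red2 c | c in C].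

Definition wt2 (n : nat) (x : 'rV['F_2]_n) : nat := #|[set i | x ord0 i != 0]|.

Definition bcode (m n : nat) (G : 'M['F_2]_(m, n)) : {set 'rV['F_2]_n} :=
  [set x | (x <= G)%MS].

Definition bdual (n : nat) (B : {set 'rV['F_2]_n}) : {set 'rV['F_2]_n} :=
  [set y | [forall x in B, (x *m y^T) 0 0 == 0]].

Definition doubly_even (n : nat) (B : {set 'rV['F_2]_n}) : Prop :=
  forall x, x \in B -> (4 %| wt2 x)%N.

Definition min_wt_ge (n : nat) (B : {set 'rV['F_2]_n}) (d : nat) : Prop :=
  forall x, x \in B -> x != 0 -> (d <= wt2 x)%N.

Definition N32_row (r : 'I_7) (i : 'I_32) : bool :=
  match val r with
  | 0 => true
  | 1 => (i < 16)%N
  | 2 => ~~ odd (i %/ 8)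
  | 3 => ~~ odd (i %/ 4)
  | 4 => ~~ odd (i %/ 2)
  | 5 => ~~ odd i
  | _ => (val i \in [:: 0; 1; 2; 3; 4; 8; 16; 28])%N
           (* v, support {1,2,3,4,5,9,17,29} in 1-based numbering *)
  end.

(* Generator matrix of N_32 = <R, v>: first 6 rows generate R = RM(1,5). *)
Definition GN32 : 'M['F_2]_(7, 32) := \matrix_(r, i) (N32_row r i)%:R.
Definition GRM15 : 'M['F_2]_(6, 32) := \matrix_(r, i) (N32_row (widen_ord (leqnSn 6) r) i)%:R.

Definition N32 : {set 'rV['F_2]_32} := bcode GN32.

(* Main.v *)
Require Import Defs.
From HB Require Import structures.
From mathcomp Require Import all_boot all_order all_algebra.
Set Implicit Arguments. Unset Strict Implicit. Unset Printing Implicit Defensive.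
Import GRing.Theory.
Local Open Scope ring_scope.

Definition bm m n (f : 'I_m -> 'I_n -> bool) : 'M['F_2]_(m,n) := \matrix_(i,j) (f i j)%:R.

Lemma F2_nat (k : nat) : (k%:R : 'F_2) = (odd k)%:R.
Proof. by rewrite -Fp_nat_mod // modn2. Qed.

Lemma F2_bool (a : 'F_2) : a = (a != 0)%:R.
Proof. by case: a => [[|[|n]] Hn] //; apply/val_inj. Qed.

Lemma sumF2 n (f : 'I_n -> bool) : \sum_i ((f i)%:R : 'F_2) = (odd (\sum_i (f i : nat)))%:R.
Proof. by rewrite -natr_sum F2_nat. Qed.

Lemma mulbm m n p (f : 'I_m -> 'I_n -> bool) (g : 'I_n -> 'I_p -> bool) :
  bm f *m bm g = bm (fun i k => odd (\sum_j (f i j && g j k))).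
Proof.
apply/matrixP=> i k; rewrite !mxE -sumF2; apply eq_bigr => j _.
by rewrite !mxE -natrM; case: (f i j); case: (g j k).
Qed.

Lemma sum_iota n (F : nat -> nat) :
  (\sum_(i < n) F i)%N = sumn (map F (iota 0 n)).
Proof. by rewrite -(big_mkord xpredT F) /index_iota subn0 sumnE big_map. Qed.

Lemma all_iota n (P : nat -> bool) : all P (iota 0 n) -> forall i : 'I_n, P i.
Proof. by move/allP=> H i; apply: H; rewrite mem_iota /= add0n ltn_ord. Qed.

Lemma all2_iota m n (P : nat -> nat -> bool) :
  all (fun a => all (P a) (iota 0 n)) (iota 0 m) -> forall (i : 'I_m) (j : 'I_n), P i j.
Proof. by move=> H i; apply: all_iota; move: i; apply: (all_iota H). Qed.

Definition Rn (r i : nat) : bool :=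
  match r with
  | 0 => true
  | 1 => (i < 16)%N
  | 2 => ~~ odd (i %/ 8)
  | 3 => ~~ odd (i %/ 4)
  | 4 => ~~ odd (i %/ 2)
  | 5 => ~~ odd i
  | _ => (i \in [:: 0; 1; 2; 3; 4; 8; 16; 28])%N
  end.
Lemma RnE r i : N32_row r i = Rn r i. Proof. by []. Qed.

Definition Bl : seq (seq nat) := [:: [:: 31]; [:: 0; 16]; [:: 0; 8]; [:: 0; 4]; [:: 0; 2]; [:: 0; 1]; [:: 0; 1; 4; 5]].
Definition Bn (i s : nat) : bool := i \in nth [::] Bl s.


Lemma GN32E : GN32 = bm N32_row. Proof. by []. Qed.

Lemma trbm m n (f : 'I_m -> 'I_n -> bool) : (bm f)^T = bm (fun j i => f i j).
Proof. by apply/matrixP=> i j; rewrite !mxE. Qed.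

Lemma eq_bm m n (f g : 'I_m -> 'I_n -> bool) : (forall i j, f i j = g i j) -> bm f = bm g.
Proof. by move=> H; apply/matrixP=> i j; rewrite !mxE H. Qed.

Lemma bm1 n : (1%:M : 'M['F_2]_n) = bm (fun i j => i == j).
Proof. by apply/matrixP=> i j; rewrite !mxE. Qed.

Lemma rank_part : \rank GN32 = 7%N.
Proof.
have H : GN32 *m bm (fun i s => Bn i s) = 1%:M.
  rewrite GN32E mulbm bm1; apply: eq_bm => r s; apply/eqP.
  rewrite (sum_iota 32 (fun j => Rn r j && Bn j s)).
  move: r s; refine (@all2_iota 7 7 (fun r s => odd (sumn [seq ((Rn r j && Bn j s) : nat) | j <- iota 0 32]) == (r == s)) _).
  by vm_compute.
apply/eqP; rewrite eqn_leq rank_leq_row /=.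
by rewrite -{1}(mxrank1 [the fieldType of 'F_2] 7) -H mxrankM_maxl.
Qed.

Lemma boolF2 (b : bool) : ((b%:R : 'F_2) != 0) = b.
Proof. by case: b. Qed.

Lemma wt2_bm n (f : 'I_1 -> 'I_n -> bool) : wt2 (bm f) = (\sum_(i < n) f ord0 i)%N.
Proof.
rewrite /wt2 cardsE -sum1_card big_mkcond /=; apply: eq_bigr => i _.
by rewrite unfold_in /= mxE boolF2; case: (f ord0 i).
Qed.

Lemma rowbm m (u : 'rV['F_2]_m) : u = bm (fun _ r => u ord0 r != 0).
Proof. apply/matrixP=> i j; rewrite !mxE ord1; exact: F2_bool. Qed.

Definition cwn (b0 b1 b2 b3 b4 b5 b6 : bool) (i : nat) : bool :=
  odd (b0 && Rn 0 i + (b1 && Rn 1 i + (b2 && Rn 2 i + (b3 && Rn 3 i + (b4 && Rn 4 i + (b5 && Rn 5 i + (b6 && Rn 6 i + 0)))))))%N.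

Lemma unroll7 (ub : 'I_7 -> bool) : exists b0 b1 b2 b3 b4 b5 b6 : bool,
  forall i, odd (\sum_(r<7) (ub r && Rn r i)) = cwn b0 b1 b2 b3 b4 b5 b6 i.
Proof. do 7 eexists. move=> i; rewrite !big_ord_recl big_ord0 /=; reflexivity. Qed.

Lemma de_check b0 b1 b2 b3 b4 b5 b6 :
  (4 %| sumn [seq (cwn b0 b1 b2 b3 b4 b5 b6 i : nat) | i <- iota 0 32])%N.
Proof. by move: b0 b1 b2 b3 b4 b5 b6; do 7 case; vm_compute. Qed.

Lemma memN32 x : x \in N32 -> exists u : 'rV['F_2]_7, x = u *m GN32.
Proof. by rewrite inE => /submxP [u ->]; exists u. Qed.

Lemma de_part : doubly_even N32.
Proof.
move=> x /memN32 [u ->]; rewrite (rowbm u) GN32E mulbm wt2_bm.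
have [b0 [b1 [b2 [b3 [b4 [b5 [b6 H]]]]]]] := unroll7 (fun r => u ord0 r != 0).
rewrite (eq_bigr (fun i : 'I_32 => (cwn b0 b1 b2 b3 b4 b5 b6 i : nat))); last by move=> i _; rewrite H.
by rewrite (sum_iota 32 (fun i => (cwn b0 b1 b2 b3 b4 b5 b6 i : nat))) de_check.
Qed.

Lemma one_part : const_mx 1 \in N32.
Proof.
rewrite inE; have -> : const_mx 1 = row (0 : 'I_7) GN32.
  by apply/matrixP=> i j; rewrite !mxE.
exact: row_sub.
Qed.

Lemma rowG r : row r GN32 = bm (fun _ i => N32_row r i).
Proof. by apply/matrixP=> i j; rewrite !mxE. Qed.

Lemma dual_row y (r : 'I_7) : y \in bdual N32 ->
  ~~ odd (\sum_(i<32) (N32_row r i && (y ord0 i != 0%R))).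
Proof.
rewrite inE => /forallP /(_ (row r GN32)) /implyP.
rewrite inE row_sub => /(_ isT) /eqP.
rewrite {1}(rowbm y) rowG trbm mulbm mxE.
by case: odd => //= /eqP; rewrite oner_eq0.
Qed.

Lemma sep_check : forall a b : 'I_32,
  (Rn 1 a == Rn 1 b) && (Rn 2 a == Rn 2 b) && (Rn 3 a == Rn 3 b) && (Rn 4 a == Rn 4 b) && (Rn 5 a == Rn 5 b) ==> (a == b :> nat).
Proof.
refine (@all2_iota 32 32 (fun a b => (Rn 1 a == Rn 1 b) && (Rn 2 a == Rn 2 b) && (Rn 3 a == Rn 3 b) && (Rn 4 a == Rn 4 b) && (Rn 5 a == Rn 5 b) ==> (a == b)) _).
by vm_compute.
Qed.

Lemma minwt_part : min_wt_ge (bdual N32) 4.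
Proof.
move=> y Hy ynz.
set S := [set i : 'I_32 | y ord0 i != 0].
have wtS : wt2 y = #|S| by [].
have sumS r : (\sum_(i<32) (N32_row r i && (y ord0 i != 0%R)) = \sum_(i in S) (N32_row r i : nat))%N.
  rewrite [RHS]big_mkcond /=; apply: eq_bigr => i _; rewrite inE.
  by case: (y ord0 i != 0); case: N32_row.
have H0 := dual_row (0 : 'I_7) Hy; rewrite sumS /= sum1_card in H0.
have Sn0 : #|S| != 0%N.
  apply: contra ynz => /eqP/eqP; rewrite cards_eq0 => /eqP S0.
  apply/eqP/matrixP=> i j; rewrite ord1 mxE.
  have : j \notin S by rewrite S0 inE.
  by rewrite inE negbK => /eqP.
rewrite wtS leqNgt; apply/negP => lt4.
have S2 : #|S| == 2%N.
  move: Sn0 H0 lt4; case: #|S| => [|[|[|[|]]]] //.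
have [a [b [ab Sab]]] := cards2P _ S2.
have Hr r : N32_row r a = N32_row r b.
  have := dual_row r Hy; rewrite sumS Sab big_setU1 /=; last by rewrite inE.
  by rewrite big_set1; case: N32_row; case: N32_row.
have := sep_check a b.
have Hr' k (Hk : (k < 7)%N) : Rn k a = Rn k b by exact: (Hr (Ordinal Hk)).
rewrite (Hr' 1%N isT) (Hr' 2%N isT) (Hr' 3%N isT) (Hr' 4%N isT) (Hr' 5%N isT) !eqxx /=.
by move=> /eqP/val_inj abe; move: ab; rewrite abe eqxx.
Qed.
Lemma Z4fact (a : 'Z_4) (b : bool) :
  [/\ odd (val a) -> ewZ4 (a + (if b then 2 else 0)) = 1%N,
      ~~ odd (val a) -> ewZ4 (a + (if a == 2 then 2 else 0)) = 0%N
    & (ewZ4 a <= 4)%N].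
Proof.
case: a => [[|[|[|[|n]]]] Hn] //; case: b; split => //.
Qed.

Definition Jn (j : nat) : bool := (j != 5%N) && ~~ Rn 6 j.
Definition Tl : seq (seq nat) := [:: [::]; [::]; [::]; [::]; [::]; [::]; [:: 1; 2]; [:: 0; 2]; [::]; [:: 4; 8]; [:: 1; 2; 4; 8]; [:: 0; 2; 4; 8]; [:: 1; 8]; [:: 0; 8]; [:: 0; 1; 2; 8]; [:: 2; 8]; [::]; [:: 4; 16]; [:: 1; 2; 4; 16]; [:: 0; 2; 4; 16]; [:: 1; 16]; [:: 0; 16]; [:: 0; 1; 2; 16]; [:: 2; 16]; [:: 1; 4; 8; 16]; [:: 0; 4; 8; 16]; [:: 0; 1; 2; 4; 8; 16]; [:: 2; 4; 8; 16]; [::]; [:: 8; 16]; [:: 1; 2; 8; 16]; [:: 0; 2; 8; 16]]%N.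
Definition Mn (j i : nat) : bool := Jn j && [|| i == j, i == 5%N | i \in nth [::] Tl j].
Definition MM : 'M['F_2]_32 := bm (fun j i : 'I_32 => Mn j i).

Lemma GM0 : GN32 *m MM^T = 0.
Proof.
rewrite GN32E /MM trbm mulbm; apply/matrixP=> r j; rewrite !mxE.
suff -> : odd (\sum_j0 (N32_row r j0 && Mn j j0)) = false by [].
apply/negbTE; rewrite (sum_iota 32 (fun i => Rn r i && Mn j i)).
move: r j; refine (@all2_iota 7 32 (fun r j => ~~ odd (sumn [seq ((Rn r i && Mn j i) : nat) | i <- iota 0 32])) _).
by vm_compute.
Qed.

Lemma MMid_check : forall i j : 'I_32, Jn i ==> (Mn j i == (j == i :> nat)).
Proof.
refine (@all2_iota 32 32 (fun i j => Jn i ==> (Mn j i == (j == i))) _).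
by vm_compute.
Qed.

Definition lift2 (y : 'rV['F_2]_32) : 'rV['Z_4]_32 := \row_i (if y ord0 i != 0 then 2 else 0).

Lemma lift_in (C : {set 'rV['Z_4]_32}) : self_dual C -> residue C = N32 ->
  forall y, y \in bdual N32 -> lift2 y \in C.
Proof.
move=> SD Hres y Hy; rewrite SD inE; apply/forallP => x; apply/implyP => xC.
have : map_mx red2 x \in N32 by rewrite -Hres; apply: imset_f.
move: Hy; rewrite inE => /forallP /(_ (map_mx red2 x)) /implyP H /H {H} /eqP.
rewrite !mxE.
set s := (\sum_(i < 32) (val (x ord0 i) * (y ord0 i != 0%R)))%N.
rewrite (eq_bigr (fun i => (val (x ord0 i) * (y ord0 i != 0))%:R)); last first.
  by move=> i _; rewrite !mxE /red2 {1}(F2_bool (y ord0 i)) natrM.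
rewrite -natr_sum -/s F2_nat => /eqP Hs.
have {}Hs : ~~ odd s by move: Hs; case: odd => //; rewrite oner_eq0.
rewrite /dotZ4 mxE (eq_bigr (fun i => (val (x ord0 i) * (y ord0 i != 0))%:R * 2)); last first.
  move=> i _; rewrite !mxE; case: (y ord0 i != 0).
    by rewrite muln1 natr_Zp.
  by rewrite muln0 mulr0 mul0r.
rewrite -mulr_suml -natr_sum -/s -natrM; apply/eqP/val_inj.
rewrite /= Zp_nat /=.
move: (odd_double_half s); rewrite (negbTE Hs) add0n => <-.
by rewrite -muln2 -mulnA modnMl.
Qed.

Lemma red2_odd (a : 'Z_4) : red2 a = (odd (val a))%:R.
Proof. by rewrite /red2 F2_nat. Qed.

Lemma boolF2_inj (b1 b2 : bool) : (b1%:R : 'F_2) = b2%:R -> b1 = b2.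
Proof. by move=> H; rewrite -(boolF2 b1) H boolF2. Qed.

Definition bnd (i : nat) : nat := if Rn 6 i then 1%N else if i == 5%N then 4%N else 0%N.

Lemma main_part (C : {set 'rV['Z_4]_32}) :
  typeII C -> residue C = N32 -> ~ extremal C.
Proof.
move=> [[_ Cadd _] SD _] Hres [Hmin _].
have vN : row (6 : 'I_7) GN32 \in N32 by rewrite inE row_sub.
rewrite -Hres in vN; case/imsetP: vN => c cC vE.
have vi (i : 'I_32) : odd (val (c ord0 i)) = Rn 6 i.
  have := congr1 (fun m : 'rV['F_2]_32 => m ord0 i) vE; rewrite !mxE red2_odd.
  by move/boolF2_inj.
pose z : 'rV['F_2]_32 := \row_j ((Jn j && (c ord0 j == 2)) %:R).
pose y := z *m MM.
have yD : y \in bdual N32.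
  rewrite inE; apply/forallP => x; apply/implyP => /memN32 [u ->].
  rewrite trmx_mul !mulmxA -(mulmxA u) GM0 mulmx0 mul0mx mxE //.
have yi (i : 'I_32) : Jn i -> y ord0 i = z ord0 i.
  move=> Ji; rewrite -[z in RHS]mulmx1 !mxE; apply: eq_bigr => j _.
  rewrite !mxE; congr (_ * _).
  by have := MMid_check i j; rewrite Ji /= => /eqP ->.
pose c' := c + lift2 y.
have c'C : c' \in C by apply: Cadd => //; exact: lift_in.
have ew (i : 'I_32) : (ewZ4 (c' ord0 i) <= bnd i)%N.
  rewrite /c' mxE /lift2 mxE /bnd; case R6 : (Rn 6 i).
    by have [H _ _] := Z4fact (c ord0 i) (y ord0 i != 0); rewrite H // vi.
  case i5 : (val i == 5%N).
    by have [_ _ H] := Z4fact (c ord0 i + (if y ord0 i != 0 then 2 else 0)) true.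
  have Ji : Jn i by rewrite /Jn R6 i5.
  rewrite yi // mxE Ji /= boolF2.
  by have [_ H _] := Z4fact (c ord0 i) true; rewrite H // vi R6.
have c'nz : c' != 0.
  apply/negP => /eqP c'0.
  have [H _ _] := Z4fact (c ord0 0) (y ord0 0 != 0).
  have e : c' ord0 0 = c ord0 0 + (if y ord0 0 != 0 then 2 else 0) by rewrite /c' mxE /lift2 mxE.
  by move: H; rewrite -e c'0 mxE vi => /(_ isT).
have := Hmin c' c'C c'nz.
suff : (eucl_wt c' <= 12)%N by move=> H1 H2; have := leq_trans H2 H1.
rewrite /eucl_wt; apply: (@leq_trans (\sum_(i < 32) bnd i)); first by apply: leq_sum => i _; exact: ew.
by rewrite (sum_iota 32 bnd); vm_compute.
Qed.

Theorem mainTheorem9 :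
  [/\ \rank GN32 = 7%N,
      doubly_even N32,
      const_mx 1 \in N32,
      min_wt_ge (bdual N32) 4
    & forall C : {set 'rV['Z_4]_32},
        typeII C -> residue C = N32 -> ~ extremal C].
Proof.
split; [exact: rank_part | exact: de_part | exact: one_part | exact: minwt_part | exact: main_part].
Qed.
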